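(* If $X$ is a non-separated-points space, then $X$ is dense-pathwise connected, i.e., every dense subset of $X$ (with the subspace topology) is pathwise connected.
   Context: Two distinct points $x,y$ of a space $X$ are called not $T_1$-points if there exists $z\in\{x,y\}$ such that $\{x,y\}\subset U$ for every open neighborhood $U$ of $z$ in $X$. A space $X$ is a non-separated-points space if every two distinct points of $X$ are not $T_1$-points. *)

(* Defs.v *)
From HB Require Import structures.
From mathcomp Require Import all_boot all_order all_algebra.
From mathcomp Require Import all_classical all_reals all_analysis.
From mathcomp Require Import Rstruct Rstruct_topology.
From Stdlib Require Import Rdefinitions.
Set Implicit Arguments. Unset Strict Implicit. Unset Printing Implicit Defensive.
Import Order.TTheory GRing.Theory Num.Theory.
Local Open Scope classical_set_scope.
Local Open Scope ring_scope.

Definition not_T1_points (X : topologicalType) (x y : X) : Prop :=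
  x <> y /\
  exists z : X, (z = x \/ z = y) /\
    forall U : set X, open U -> U z -> U x /\ U y.

Definition non_separated_points_space (X : topologicalType) : Prop :=
  forall x y : X, x <> y -> not_T1_points x y.

(* The unit interval [0,1] of the real line, with the subspace topology
   (set_type carries the initial topology of the inclusion). *)
Definition unit_interval : Type := set_type (`[0%R, 1%R] : set Rdefinitions.R).

Definition path_connected_space (T : topologicalType) : Prop :=
  forall x y : T, exists f : unit_interval -> T,
    continuous f /\
    (forall t : unit_interval, set_val t = 0%R -> f t = x) /\
    (forall t : unit_interval, set_val t = 1%R -> f t = y).

Definition dense_pathwise_connected (X : topologicalType) : Prop :=
  forall A : set X, dense A -> path_connected_space (set_type A).

(* Main.v *)
Require Import Defs.
From HB Require Import structures.
From mathcomp Require Import all_boot all_order all_algebra.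
From mathcomp Require Import all_classical all_reals all_analysis.
From mathcomp Require Import Rstruct Rstruct_topology.

Import Order.TTheory GRing.Theory Num.Theory.
Local Open Scope classical_set_scope.

Lemma step_cont (T : topologicalType) (p q : T) (O : set unit_interval) :
  open O -> (forall U : set T, open U -> U p -> U q) ->
  continuous (fun t : unit_interval => if pselect (O t) then q else p).
Proof.
move=> oO hpq; apply/continuousP => U oU.
have [Up|Unp] := pselect (U p).
  have Uq := hpq U oU Up.
  rewrite (_ : _ @^-1` _ = setT); first exact: openT.
  by apply/seteqP; split => t //= _; case: pselect.
have [Uq|Unq] := pselect (U q).
  rewrite (_ : _ @^-1` _ = O) //.
  by apply/seteqP; split => t /=; case: pselect.
rewrite (_ : _ @^-1` _ = set0); first exact: open0.
by apply/seteqP; split => t //=; case: pselect.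
Qed.

Lemma sub_nbhd (X : topologicalType) (A : set X) (a b : set_type A) :
  (forall U : set X, open U -> U (set_val a) -> U (set_val b)) ->
  forall U : set (set_type A), open U -> U a -> U b.
Proof.
move=> h U [W oW <-] /= Wa; exact: h.
Qed.

Theorem theorem5p6 (X : topologicalType) :
  non_separated_points_space X -> dense_pathwise_connected X.
Proof.
move=> nsp A _ a b.
have [->|ab] := pselect (a = b).
  by exists (fun=> b); split; [exact: cst_continuous|split].
have vab : set_val a <> set_val b by move=> e; apply: ab; exact: val_inj.
have [_ [z [[->|->] hz]]] := nsp _ _ vab.
  exists (fun t : unit_interval => if pselect ((fun t : unit_interval => (0 < set_val t)%R) t) then b else a).
  split.
    apply: step_cont.
      by exists [set x | (0 < x)%R]; first exact: open_gt.
    by apply: sub_nbhd => U oU /(hz U oU) [].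
  split => t /= ->; case: pselect => //=.
  by rewrite (_ : Rdefinitions.IZR BinNums.Z0 = 0%R) // ltxx.
exists (fun t : unit_interval => if pselect ((fun t : unit_interval => (set_val t < 1)%R) t) then a else b).
split.
  apply: step_cont.
    by exists [set x | (x < 1)%R]; first exact: open_lt.
  by apply: sub_nbhd => U oU /(hz U oU) [].
split => t /= ->; case: pselect => //=.
by rewrite (_ : Rdefinitions.IZR (BinNums.Zpos 1%AC) = 1%R) // ltxx.
Qed.
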